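(* Let $X$ be a compact metric space, $T\colon X\to X$ a homeomorphism and $\mu$ an ergodic $T$-invariant Borel probability measure. Let $A,H\colon X\to\mathbb{GL}(2,\mathbb{R})$ be continuous and suppose the cocycles $A_T$ and $H_T$ are quasi-conjugated. Then (i) for every $\theta\in\mathbb{R}$ the cocycles generated by $A_\theta(x)=A(x)R_\theta$ and $H_\theta(x)=H(x)R_\theta$ over $T$ are quasi-conjugated, and (ii) $\lambda^+(A)=\lambda^+(H)$.
   Context: For continuous $B\colon X\to\mathbb{GL}(2,\mathbb{R})$, $B_T(x,v)=(Tx,B(x)v)$ on $X\times\mathbb{R}^2$, $B^n(x)=B(T^{n-1}x)\cdots B(x)$, and $\lambda^+(B)=\lim_{n\to\infty}\frac1n\log\|B^n(x)\|$ ($\mu$-a.e. constant). $R_\theta$ is the rotation by angle $\theta$. The cocycles $A_T$ and $H_T$ are quasi-conjugated if there exist families $\{B(x)\in\mathbb{SO}(2,\mathbb{R}):x\in X\}$ and $\{D(x)\in\mathbb{SO}(2,\mathbb{R}):x\in X\}$ (no continuity in $x$ required) such that $H(x)=D(x)^{-1}A(x)B(x)$ and $B(Tx)=s(x)D(x)$ with $s(x)\in\{1,-1\}$, for every $x\in X$. *)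

(* Defs.v *)
From HB Require Import structures.
From mathcomp Require Import all_boot all_order all_algebra.
From mathcomp Require Import all_classical all_reals all_analysis.
Set Implicit Arguments.
Unset Strict Implicit.
Unset Printing Implicit Defensive.
Import Order.TTheory GRing.Theory Num.Theory.
Import numFieldNormedType.Exports.
Local Open Scope classical_set_scope.
Local Open Scope ring_scope.

Definition borel (X : ptopologicalType) := g_sigma_algebraType (@open X).

Definition vnorm2 {R : realType} (v : 'cV[R]_2) : R :=
  Num.sqrt (v ord0 ord0 ^+ 2 + v (lift ord0 ord0) ord0 ^+ 2).

Definition opnorm2 {R : realType} (M : 'M[R]_2) : R :=
  sup [set vnorm2 (M *m v) | v in [set v : 'cV[R]_2 | vnorm2 v = 1]].

Fixpoint cocycle_pow {R : realType} {X : Type} (T : X -> X)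
    (B : X -> 'M[R]_2) (n : nat) (x : X) : 'M[R]_2 :=
  match n with
  | 0 => 1%:M
  | n'.+1 => B (iter n' T x) *m cocycle_pow T B n' x
  end.

Definition rotation {R : realType} (t : R) : 'M[R]_2 :=
  \matrix_(i < 2, j < 2)
    if (i : nat) == 0%N then (if (j : nat) == 0%N then cos t else - sin t)
    else (if (j : nat) == 0%N then sin t else cos t).

Definition SO2 {R : realType} (M : 'M[R]_2) : Prop :=
  M^T *m M = 1%:M /\ \det M = 1.

(* Quasi-conjugacy of the cocycles A_T and H_T (no continuity required). *)
Definition quasi_conjugated {R : realType} {X : Type} (T : X -> X)
    (A H : X -> 'M[R]_2) : Prop :=
  exists (Bf Df : X -> 'M[R]_2) (s : X -> R),
    forall x, [/\ SO2 (Bf x), SO2 (Df x), (s x = 1 \/ s x = -1),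
                  H x = invmx (Df x) *m A x *m Bf x
                & Bf (T x) = s x *: Df x].

Definition homeomorphism {X : topologicalType} (T : X -> X) : Prop :=
  continuous T /\
  exists Tinv : X -> X, [/\ cancel T Tinv, cancel Tinv T & continuous Tinv].

Definition invariant_measure {R : realType} {X : ptopologicalType}
    (mu : probability (borel X) R) (T : X -> X) : Prop :=
  forall E : set (borel X), measurable E -> mu (T @^-1` E) = mu E.

Definition ergodic {R : realType} {X : ptopologicalType}
    (mu : probability (borel X) R) (T : X -> X) : Prop :=
  forall E : set (borel X), measurable E -> T @^-1` E = E ->
    mu E = 0%E \/ mu E = 1%E.

(* "lambda^+(B) = c": for mu-a.e. x, (1/n) log ||B^n(x)|| --> c. *)
Definition top_lyap_is {R : realType} {X : ptopologicalType}
    (mu : probability (borel X) R) (T : X -> X) (B : X -> 'M[R]_2) (c : R)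
    : Prop :=
  {ae mu, forall x : borel X,
     (fun n : nat => (n%:R)^-1 * ln (opnorm2 (cocycle_pow T B n x)))
       @ \oo --> c}.

(* Main.v *)
Require Import Defs.
From HB Require Import structures.
From mathcomp Require Import all_boot all_order all_algebra.
From mathcomp Require Import all_classical all_reals all_analysis.
From mathcomp Require Import ring lra.
Import Order.TTheory GRing.Theory Num.Theory.
Import numFieldNormedType.Exports.
Local Open Scope classical_set_scope.
Local Open Scope ring_scope.

Section Aux.
Variable R : realType.

Lemma vn_sq (v : 'cV[R]_2) : vnorm2 v = Num.sqrt ((v^T *m v) ord0 ord0).
Proof.
rewrite /vnorm2 !mxE !big_ord_recr big_ord0 /= add0r !mxE.
congr (Num.sqrt (_ + _)); rewrite expr2; congr (_ * _); congr (v _ _);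
  by apply/val_inj.
Qed.

Definition orth (U : 'M[R]_2) := U^T *m U = 1%:M.

Lemma vn_orth U v : orth U -> vnorm2 (U *m v) = vnorm2 v.
Proof.
move=> hU; rewrite !vn_sq trmx_mul mulmxA -(mulmxA v^T) hU mulmx1 //.
Qed.

Lemma orth_inv U : orth U -> U *m U^T = 1%:M.
Proof. by move=> hU; apply: mulmx1C. Qed.

Lemma orth_tr U : orth U -> orth U^T.
Proof. by move=> hU; rewrite /orth trmxK orth_inv. Qed.

Lemma orth_scale c U : c ^+ 2 = 1 -> orth U -> orth (c *: U).
Proof.
move=> hc hU; rewrite /orth linearZ /= linearZ /= -scalemxAl scalerA -expr2 hc scale1r //.
Qed.

Lemma opnorm_orth U M V : orth U -> orth V ->
  opnorm2 (U *m M *m V) = opnorm2 M.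
Proof.
move=> hU hV; rewrite /opnorm2; congr sup.
apply/seteqP; split => _ [v hv <-].
  exists (V *m v); first by rewrite /= vn_orth.
  by rewrite -!mulmxA (@vn_orth _ _ hU).
exists (V^T *m v); first by rewrite /= (vn_orth _ _ (@orth_tr _ hV)).
by rewrite -!mulmxA (mulmxA V) orth_inv // mul1mx (@vn_orth _ _ hU).
Qed.

Lemma SO2_orth (D : 'M[R]_2) : SO2 D -> orth D.
Proof. by case. Qed.

Lemma SO2_inv (D : 'M[R]_2) : SO2 D -> invmx D = D^T.
Proof.
move=> [hD _]; have [_ uD] := mulmx1_unit hD.
by rewrite -[LHS]mul1mx -hD -mulmxA mulmxV // mulmx1.
Qed.

Lemma SO2_form (D : 'M[R]_2) : SO2 D ->
  D ord0 ord0 = D (lift ord0 ord0) (lift ord0 ord0) /\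
  D ord0 (lift ord0 ord0) = - D (lift ord0 ord0) ord0.
Proof.
move=> [hD hdet].
have e := congr1 (fun M : 'M[R]_2 => M ord0 ord0) hD.
have f := congr1 (fun M : 'M[R]_2 => M (lift ord0 ord0) (lift ord0 ord0)) hD.
have g := congr1 (fun M : 'M[R]_2 => M ord0 (lift ord0 ord0)) hD.
move: e f g hdet; rewrite !mxE !big_ord_recl big_ord0 /= ?mxE /=.
rewrite (expand_det_row _ ord0) !big_ord_recl big_ord0 /=.
rewrite /cofactor !det_mx11 /= !mxE !big_ord0.
set a := D ord0 ord0; set b := D ord0 (lift ord0 ord0).
set c := D (lift ord0 ord0) ord0; set d := D (lift ord0 ord0) (lift ord0 ord0).
move=> e f g h.
have hc : D (lift ord0 0) (lift (lift ord0 ord0) 0) = c.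
  by rewrite /c; congr (D _ _); apply: val_inj.
have hd : D (lift ord0 0) (lift ord0 0) = d.
  by rewrite /d; congr (D _ _); apply: val_inj.
rewrite ?hc ?hd /= expr0 expr1 in h.
have s : (a - d) ^+ 2 + (b + c) ^+ 2 = 0.
  rewrite !expr2; nra.
have s1 := sqr_ge0 (a - d); have s2 := sqr_ge0 (b + c).
have t1 : (a - d) ^+ 2 = 0 by lra.
have t2 : (b + c) ^+ 2 = 0 by lra.
move/eqP: t1; rewrite sqrf_eq0 subr_eq0 => /eqP ->.
move/eqP: t2; rewrite sqrf_eq0 addr_eq0 => /eqP ->.
by [].
Qed.


Lemma ord2P (i : 'I_2) : i = ord0 \/ i = lift ord0 ord0.
Proof.
case: i => [[|[|k]] hk]; [left|right|by []]; exact: val_inj.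
Qed.

Lemma SO2_unit (D : 'M[R]_2) : SO2 D -> D \in unitmx.
Proof. by case=> _ hd; rewrite unitmxE hd unitr1. Qed.

Lemma SO2_comm_rot (D : 'M[R]_2) t : SO2 D -> D *m rotation t = rotation t *m D.
Proof.
move=> hD; have [e1 e2] := @SO2_form D hD.
apply/matrixP => i j; rewrite !mxE !big_ord_recl !big_ord0 !mxE /=.
case: (ord2P i) => ->; case: (ord2P j) => ->; rewrite /= ?e1 ?e2; ring.
Qed.

Lemma cocycle_qc (X : Type) (T : X -> X) (A H Bf Df : X -> 'M[R]_2) (s : X -> R) :
  (forall x, [/\ SO2 (Bf x), SO2 (Df x), (s x = 1 \/ s x = -1),
                  H x = invmx (Df x) *m A x *m Bf x
                & Bf (T x) = s x *: Df x]) ->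
  forall n x, exists c : R, c ^+ 2 = 1 /\
    cocycle_pow T H n.+1 x = c *: (invmx (Df (iter n T x)) *m cocycle_pow T A n.+1 x *m Bf x).
Proof.
move=> hq; elim=> [|n IH] x.
  exists 1; split; first by rewrite expr1n.
  by rewrite /= !mulmx1 scale1r; have [_ _ _ -> _] := hq x.
have [c [hc E]] := IH x.
set y := iter n T x.
have [_ hDy hs _ hB] := hq y.
have [_ _ _ hH _] := hq (T y).
exists (s y * c); split.
  by rewrite exprMn hc mulr1; case: hs => ->; rewrite ?expr1n ?sqrrN ?expr1n.
change (H (T y) *m cocycle_pow T H n.+1 x = (s y * c) *: (invmx (Df (T y)) *m (A (T y) *m cocycle_pow T A n.+1 x) *m Bf x)).
rewrite E hH hB.
rewrite -?scalemxAl -?scalemxAr -?scalemxAl -?scalemxAr scalerA.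
rewrite [c * _]mulrC; congr (_ *: _); rewrite -/y !mulmxA.
by rewrite -(mulmxA _ (Df y)) mulmxV ?SO2_unit // mulmx1.
Qed.

Lemma opnorm_qc (X : Type) (T : X -> X) (A H Bf Df : X -> 'M[R]_2) (s : X -> R) :
  (forall x, [/\ SO2 (Bf x), SO2 (Df x), (s x = 1 \/ s x = -1),
                  H x = invmx (Df x) *m A x *m Bf x
                & Bf (T x) = s x *: Df x]) ->
  forall n x, opnorm2 (cocycle_pow T H n x) = opnorm2 (cocycle_pow T A n x).
Proof.
move=> hq [|n] x; first by [].
have [c [hc ->]] := @cocycle_qc _ _ _ _ _ _ _ hq n x.
have [hB _ _ _ _] := hq x.
have [_ hD _ _ _] := hq (iter n T x).
rewrite SO2_inv // scalemxAl scalemxAl opnorm_orth //.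
  by apply: orth_scale => //; apply: orth_tr; apply: SO2_orth.
exact: SO2_orth.
Qed.

End Aux.

Theorem lemma2p1 (R : realType) (X : pseudoPMetricType R)
  (T : X -> X) (mu : probability (borel X) R) (A H : X -> 'M[R]_2) :
  hausdorff_space X -> compact [set: X] ->
  homeomorphism T -> invariant_measure mu T -> ergodic mu T ->
  continuous A -> continuous H ->
  (forall x, A x \in unitmx) -> (forall x, H x \in unitmx) ->
  quasi_conjugated T A H ->
  (forall theta : R,
     quasi_conjugated T (fun x => A x *m rotation theta) (fun x => H x *m rotation theta))
  /\ (forall c : R, top_lyap_is mu T A c <-> top_lyap_is mu T H c).
Proof.
move=> _ _ _ _ _ _ _ _ _ [Bf [Df [s hq]]]; split.
  move=> t; exists Bf, Df, s => x.
  have [hB hD hs hH hT] := hq x; split => //.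
  rewrite hH -!mulmxA; congr (_ *m _); congr (_ *m _).
  exact: SO2_comm_rot.
move=> c; rewrite /top_lyap_is.
have E : forall x : borel X,
  (fun n : nat => (n%:R)^-1 * ln (opnorm2 (cocycle_pow T A n x))) =
  (fun n : nat => (n%:R)^-1 * ln (opnorm2 (cocycle_pow T H n x))).
  by move=> x; apply: funext => n; rewrite (@opnorm_qc _ _ _ _ _ _ _ _ hq).
change (almost_everywhere mu (fun x : borel X =>
   (fun n : nat => (n%:R)^-1 * ln (opnorm2 (cocycle_pow T A n x))) @ \oo --> c)
  <-> almost_everywhere mu (fun x : borel X =>
   (fun n : nat => (n%:R)^-1 * ln (opnorm2 (cocycle_pow T H n x))) @ \oo --> c)).
have -> : (fun x : borel X =>
   (fun n : nat => (n%:R)^-1 * ln (opnorm2 (cocycle_pow T A n x))) @ \oo --> c)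
  = (fun x : borel X =>
   (fun n : nat => (n%:R)^-1 * ln (opnorm2 (cocycle_pow T H n x))) @ \oo --> c).
  by apply: funext => x; rewrite E.
by [].
Qed.
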